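(* Let a WIFS satisfy the $\Phi$-FNC for an iteration rule $\Phi$, and let $\mathcal L$ be a loop class of its transition graph with vertices $v_1,\dots,v_k$. For $1\le i,j\le k$ let $M_{i,j}=\sum_e T(e)$, the sum over all edges $e$ of $\mathcal G$ from $v_i$ to $v_j$ (the zero matrix of the appropriate size if there are none), and let $M=M(\mathcal L)$ be the block matrix $(M_{i,j})_{1\le i,j\le k}$. If the non-negative matrix $M$ is irreducible, then $\mathcal L$ is an irreducible loop class.
   Context: Setting. A weighted iterated function system (WIFS) $(S_i,p_i)_{i\in\mathcal I}$ consists of a finite index set $\mathcal I$, maps $S_i(x)=r_ix+d_i$ on $\mathbb R$ with $0<|r_i|<1$, and probabilities $p_i>0$ with $\sum_i p_i=1$. Its self-similar set $K$ is the unique nonempty compact set with $K=\bigcup_i S_i(K)$ and its self-similar measure $\mu$ is the unique Borel probability measure with $\mu(E)=\sum_i p_i\,\mu(S_i^{-1}(E))$. Standing assumptions: $K$ is not a singleton and its convex hull is $[0,1]$. For a finite word $\sigma=\sigma_1\cdots\sigma_n$ over $\mathcal I$ (the set of all finite words, including the empty word, is $\mathcal I^*$) put $S_\sigma=S_{\sigma_1}\circ\cdots\circ S_{\sigma_n}$, $p_\sigma=p_{\sigma_1}\cdots p_{\sigma_n}$ (identity and $1$ for the empty word). For a map $f$, $f\mu:=\mu\circ f^{-1}$. Iteration rules and net intervals. Fix a total order on the affine bijections $x\mapsto ax+b$ ($a\ne0$) of $\mathbb R$. For a closed interval $J$ let $T_J(x)=rx+c$ ($r>0$) be the map with $T_J([0,1])=J$.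 An iteration rule $\Phi$ assigns to each finite strictly increasing tuple $v=(f_1,\dots,f_m)$ of such maps a tuple $\Phi(v)=(\mathcal C_1,\dots,\mathcal C_m)$ of finite subsets of $\mathcal I^*$ such that for each $i$ and all large $n$ every word of length $n$ has a unique prefix in $\mathcal C_i$. Children of a pair $(\Delta,v)$, $\Delta=[a,b]$: let $\mathcal Y=\{T_\Delta\circ f_i\circ S_\tau:1\le i\le m,\tau\in\mathcal C_i\}$ and list $\{a,b\}\cup\{g(z):g\in\mathcal Y,z\in\{0,1\},g(z)\in\Delta\}$ as $a=y_1<\dots<y_{k+1}=b$; the children are the pairs $(\Delta',v')$ with $\Delta'=[y_j,y_{j+1}]$, $(y_j,y_{j+1})\cap K\ne\emptyset$, and $v'$ the increasing tuple of the distinct maps $T_{\Delta'}^{-1}\circ g$, $g\in\mathcal Y$, $g(K)\cap(y_j,y_{j+1})\ne\emptyset$. Let $\mathcal N_0=\{([0,1],(\mathrm{id}))\}$ and $\mathcal N_{n+1}$ the set of children of members of $\mathcal N_n$; second components are neighbour sets. $\Phi$ must also satisfy: (i) $\max\{r\,\mathrm{diam}\Delta:(\Delta,v)\in\mathcal N_n,(x\mapsto rx+c)\in v\}\to0$; (ii) if $f_1\neq f_2$ lie in a neighbour set then $f_1\circ S_\sigma\ne f_2$ for all $\sigma\in\mathcal I^*$. (Convention: a pair whose only child has the same interval is replaced by that child.) Transition graph. Children and their data depend only on $v$. The transition graph $\mathcal G$ has as vertices the neighbour sets occurring, root $(\mathrm{id})$, and one edge $e$ from $v$ to $v'$ for each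 child $(\Delta',v')$ of a pair $(\Delta,v)$ (distinguished by the relative position of $\Delta'$ in $\Delta$), with transition matrix $T(e)$: for $v=(f_1,\dots,f_m)$, $v'=(g_1,\dots,g_n)$, $\Phi(v)=(\mathcal C_1,\dots,\mathcal C_m)$, $T(e)$ is the $m\times n$ matrix with $T(e)_{i,j}=\frac{f_i\mu((0,1))}{g_j\mu((0,1))}\sum p_\omega$ over $\omega\in\mathcal C_i$ with $T_\Delta\circ f_i\circ S_\omega=T_{\Delta'}\circ g_j$. For a path $\eta=(e_1,\dots,e_n)$, $T(\eta)=T(e_1)\cdots T(e_n)$ and $\|A\|$ = sum of entries. The WIFS satisfies the $\Phi$-FNC if $\mathcal G$ is finite. A loop class is an induced subgraph $\mathcal L$ of $\mathcal G$ that is strongly connected, has at least one edge, and is maximal with these properties. $\mathcal L$ is irreducible if there are a finite set $\mathcal H$ of paths and a constant $C\ge1$ such that for all finite paths $\eta_1,\eta_2$ in $\mathcal L$ there is $\gamma\in\mathcal H$ with $\eta_1\gamma\eta_2$ a path and $C^{-1}\|T(\eta_1)\|\|T(\eta_2)\|\le\|T(\eta_1\gamma\eta_2)\|\le C\|T(\eta_1)\|\|T(\eta_2)\|$. A non-negative square matrix $M$ is irreducible if for all indices $i,j$ there is $n\ge1$ with $(M^n)_{i,j}>0$. *)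

(* Defs.v *)
(* Abstract transition graph of a WIFS satisfying the
   Phi-FNC: a finite directed multigraph (vertex type V finite = Phi-FNC),
   each vertex v (a neighbour set) having size d v, and each edge e carrying
   a non-negative transition matrix T e of size d (src e) x d (tgt e).
   Matrices are stored as functions nat -> nat -> R; only the entries with
   row index < d (src e) and column index < d (tgt e) are ever used. *)
From HB Require Import structures.
From mathcomp Require Import all_boot all_order all_algebra.
Set Implicit Arguments. Unset Strict Implicit. Unset Printing Implicit Defensive.
Import Order.TTheory GRing.Theory Num.Theory.
Local Open Scope ring_scope.

Section TransitionGraph.
Variables (R : realFieldType) (V E : finType) (src tgt : E -> V)
  (d : V -> nat) (T : E -> nat -> nat -> R).

Definition adj (e f : E) : bool := tgt e == src f.

Definition is_path (s : seq E) : Prop := s != [::] /\ sorted adj s.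

Definition edge_in (L : {set V}) (e : E) : bool := (src e \in L) && (tgt e \in L).

Definition path_in (L : {set V}) (s : seq E) : Prop := is_path s /\ all (edge_in L) s.

Definition walk_in (L : {set V}) (u w : V) (s : seq E) : Prop :=
  sorted adj s /\ all (edge_in L) s /\
  match s with
  | [::] => u = w
  | e :: p => src e = u /\ tgt (last e p) = w
  end.

Definition strongly_connected (L : {set V}) : Prop :=
  forall u w, u \in L -> w \in L -> exists s, walk_in L u w s.

Definition has_edge (L : {set V}) : Prop := exists e, edge_in L e.

Definition loop_class (L : {set V}) : Prop :=
  [/\ strongly_connected L, has_edge L &
      forall L' : {set V}, L \subset L' -> strongly_connected L' -> has_edge L' ->
        L' = L].

(* T(eta) = T(e_1) ... T(e_n), as a function of (nat) row / column indices *)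
Fixpoint pmat (e : E) (p : seq E) (i j : nat) : R :=
  match p with
  | [::] => T e i j
  | f :: p' => \sum_(k < d (tgt e)) T e i k * pmat f p' k j
  end.

Definition pnorm (s : seq E) : R :=
  match s with
  | [::] => 0
  | e :: p => \sum_(i < d (src e)) \sum_(j < d (tgt (last e p))) pmat e p i j
  end.

Definition irreducible_loop_class (L : {set V}) : Prop :=
  exists (H : seq (seq E)) (C : R), 1 <= C /\
    forall eta1 eta2, path_in L eta1 -> path_in L eta2 ->
      exists2 gamma, gamma \in H &
        [/\ is_path gamma, is_path (eta1 ++ gamma ++ eta2),
            C^-1 * (pnorm eta1 * pnorm eta2) <= pnorm (eta1 ++ gamma ++ eta2) &
            pnorm (eta1 ++ gamma ++ eta2) <= C * (pnorm eta1 * pnorm eta2)].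

(* indices of the block matrix M(L): pairs (v, a) with v in L, a < d v *)
Definition Lidx (L : {set V}) : {set {v : V & 'I_(d v)}} :=
  [set x | tag x \in L].

Definition Mentry (x y : {v : V & 'I_(d v)}) : R :=
  \sum_(e | (src e == tag x) && (tgt e == tag y)) T e (tagged x) (tagged y).

Definition blockM (L : {set V}) : 'M[R]_#|Lidx L| :=
  \matrix_(i, j) Mentry (enum_val i) (enum_val j).

End TransitionGraph.

Definition irreducible_mx (R : realFieldType) (n : nat) (A : 'M[R]_n) : Prop :=
  forall i j : 'I_n, exists k : nat, (0 < k)%N /\ 0 < (A ^+ k) i j.

(* Main.v *)
Require Import Defs.
From HB Require Import structures.
From mathcomp Require Import all_boot all_order all_algebra.
From Stdlib Require Import IndefiniteDescription.
From mathcomp Require Import ring.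
Import Order.TTheory GRing.Theory Num.Theory.
Local Open Scope ring_scope.

Section Helpers.
Variable R : realFieldType.

Lemma single_le_sum n (F : nat -> R) a : (a < n)%N ->
  (forall k, (k < n)%N -> 0 <= F k) -> F a <= \sum_(k < n) F k.
Proof.
move=> ha hF; rewrite (bigD1 (Ordinal ha)) //= lerDl.
by apply: sumr_ge0 => k _; apply: hF.
Qed.

Lemma sum_le_card_max n (F : nat -> R) a :
  (forall k, (k < n)%N -> F k <= F a) -> \sum_(k < n) F k <= n%:R * F a.
Proof.
move=> h; apply: le_trans (_ : \sum_(k < n) F a <= _).
  by apply: ler_sum => k _; apply: h.
by rewrite sumr_const card_ord mulr_natl.
Qed.

Lemma exists_argmax n (F : nat -> R) : (0 < n)%N ->
  exists a, (a < n)%N /\ forall k, (k < n)%N -> F k <= F a.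
Proof.
elim: n => [//|n IH] _.
case: n IH => [|n] IH.
  by exists 0%N; split => // k; rewrite ltnS leqn0 => /eqP ->.
have [a [ha hm]] := IH isT.
case: (leP (F a) (F n.+1)) => hle.
  exists n.+1; split => // k; rewrite ltnS leq_eqVlt => /orP [/eqP -> //|hk].
  exact: le_trans (hm _ hk) hle.
exists a; split; first by apply: ltn_trans ha _.
move=> k; rewrite ltnS leq_eqVlt => /orP [/eqP -> |hk]; first exact: ltW.
exact: hm.
Qed.

Lemma sum4 n1 n2 n3 n4 (A B Cm : nat -> nat -> R) :
 \sum_(i < n1) \sum_(j < n4) \sum_(k < n2) A i k * \sum_(l < n3) B k l * Cm l j
 = \sum_(k < n2) \sum_(l < n3) B k l * ((\sum_(i < n1) A i k) * (\sum_(j < n4) Cm l j)).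
Proof.
under eq_bigr => i _ do under eq_bigr => j _ do under eq_bigr => k _ do rewrite mulr_sumr.
under eq_bigr => i _ do rewrite exchange_big.
rewrite exchange_big /=.
under eq_bigr => k _ do under eq_bigr => i _ do rewrite exchange_big.
under eq_bigr => k _ do rewrite exchange_big.
apply: eq_bigr => k _; apply: eq_bigr => l _.
rewrite mulr_suml mulr_sumr; apply: eq_bigr => i _.
rewrite mulr_sumr mulr_sumr; apply: eq_bigr => j _.
by rewrite mulrA mulrCA mulrA [A i k * _]mulrC.
Qed.
Lemma sum_prod n m (N : R) (F G : nat -> R) :
  \sum_(k < n) \sum_(l < m) N * (F k * G l) = N * ((\sum_(k < n) F k) * \sum_(l < m) G l).
Proof.
rewrite mulr_suml mulr_sumr; apply: eq_bigr => k _.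
rewrite mulr_sumr mulr_sumr; apply: eq_bigr => l _.
by rewrite mulrA.
Qed.
End Helpers.

Section Graph.
Variables (R : realFieldType) (V E : finType) (src tgt : E -> V)
  (d : V -> nat) (T : E -> nat -> nat -> R).
Hypothesis T_nonneg : forall e i j, (i < d (src e))%N -> (j < d (tgt e))%N -> 0 <= T e i j.

Local Notation pm := (pmat tgt d T).

Lemma pmat_cat e p f q i j :
  pm e (p ++ f :: q) i j = \sum_(k < d (tgt (last e p))) pm e p i k * pm f q k j.
Proof.
elim: p e i => [//|g p IH] e i /=.
under eq_bigr => k _ do rewrite IH mulr_sumr.
rewrite exchange_big /=; apply: eq_bigr => l _.
by rewrite mulr_suml; apply: eq_bigr => k _; rewrite mulrA.
Qed.

Lemma pmat_ge0 e p i j : sorted (adj src tgt) (e :: p) ->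
  (i < d (src e))%N -> (j < d (tgt (last e p)))%N -> 0 <= pm e p i j.
Proof.
elim: p e i => [|f p IH] e i /=; first by move=> _; apply: T_nonneg.
move=> /andP [/eqP hadj hp] hi hj.
apply: sumr_ge0 => k _; apply: mulr_ge0; first by apply: T_nonneg.
by apply: IH => //; rewrite -hadj.
Qed.

Lemma pnorm_ge0 e p : sorted (adj src tgt) (e :: p) -> 0 <= pnorm src tgt d T (e :: p).
Proof.
move=> hs; apply: sumr_ge0 => i _; apply: sumr_ge0 => j _.
exact: pmat_ge0.
Qed.

Lemma entry_le_pnorm e p a b : sorted (adj src tgt) (e :: p) ->
  (a < d (src e))%N -> (b < d (tgt (last e p)))%N -> pm e p a b <= pnorm src tgt d T (e :: p).
Proof.
move=> hs ha hb /=.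
apply: le_trans (@single_le_sum _ _ (fun i => \sum_(j < d (tgt (last e p))) pm e p i j) _ ha _).
  apply: (@single_le_sum _ _ (fun j => pm e p a j) _ hb) => k hk; exact: pmat_ge0.
move=> k hk; apply: sumr_ge0 => j _; exact: pmat_ge0.
Qed.

End Graph.

Lemma sum_gt0_exists (R : realFieldType) (I : finType) (P : pred I) (F : I -> R) :
  0 < \sum_(i | P i) F i -> exists i, P i /\ 0 < F i.
Proof.
case: (pickP (fun i => P i && (0 < F i))) => [i /andP [h1 h2]|hn] hs; first by exists i.
have : \sum_(i | P i) F i <= 0.
  apply: sumr_le0 => i hi; move: (hn i); rewrite hi /= => /negbT.
  by rewrite -leNgt.
by rewrite leNgt hs.
Qed.

Section Graph3.
Variables (R : realFieldType) (V E : finType) (src tgt : E -> V)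
  (d : V -> nat) (T : E -> nat -> nat -> R).
Hypothesis T_nonneg : forall e i j, (i < d (src e))%N -> (j < d (tgt e))%N -> 0 <= T e i j.
Variable L : {set V}.
Local Notation pm := (pmat tgt d T).
Local Notation M := (blockM src tgt d T L).

Lemma blockM_ge0 i j : 0 <= M i j.
Proof.
rewrite mxE /Mentry; apply: sumr_ge0 => e /andP [/eqP hs /eqP ht].
by apply: T_nonneg; rewrite ?hs ?ht ltn_ord.
Qed.

Lemma pow_ge0 k i j : 0 <= (M ^+ k) i j.
Proof.
elim: k i j => [|k IH] i j; first by rewrite expr0 mxE ler0n.
rewrite exprS mxE; apply: sumr_ge0 => l _; apply: mulr_ge0 => //.
exact: blockM_ge0.
Qed.

Lemma path_of_pos k i j : 0 < (M ^+ k.+1) i j ->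
  exists e p, [/\ sorted (adj src tgt) (e :: p), src e = tag (enum_val i),
    tgt (last e p) = tag (enum_val j) &
    0 < pm e p (tagged (enum_val i)) (tagged (enum_val j))].
Proof.
elim: k i => [|k IH] i.
  rewrite expr1 mxE /Mentry => /sum_gt0_exists [e [/andP [/eqP hs /eqP ht] hT]].
  by exists e, [::]; split.
rewrite exprS mxE => /sum_gt0_exists [l [_ hl]].
have h1 : 0 < M i l.
  rewrite lt_def blockM_ge0 andbT; apply/eqP => h0.
  by move: hl; rewrite h0 mul0r ltxx.
move: hl; rewrite pmulr_rgt0 // => /IH [e' [p [hs' hsrc' htgt' hpos']]].
move: h1; rewrite mxE /Mentry => /sum_gt0_exists [e [/andP [/eqP hs /eqP ht] hT]].
exists e, (e' :: p); split => //=.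
  by rewrite [path _ _ _]hs' andbT /adj hsrc' ht eqxx.
have hc : (tagged (enum_val l) < d (tgt e))%N by rewrite ht ltn_ord.
apply: lt_le_trans (@single_le_sum _ _ (fun m => T e (tagged (enum_val i)) m *
   pm e' p m (tagged (enum_val j))) _ hc _).
  by apply: mulr_gt0.
move=> m hm; apply: mulr_ge0.
  by apply: T_nonneg => //; rewrite hs ltn_ord.
apply: (@pmat_ge0 _ _ _ src tgt d T T_nonneg) => //; first by rewrite hsrc' -ht.
by rewrite htgt' ltn_ord.
Qed.

End Graph3.

Theorem lemma4p5 (R : realFieldType) (V E : finType) (src tgt : E -> V)
  (d : V -> nat) (T : E -> nat -> nat -> R)
  (d_pos : forall v, (0 < d v)%N)
  (T_nonneg : forall e i j, (i < d (src e))%N -> (j < d (tgt e))%N -> 0 <= T e i j)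
  (L : {set V}) :
  loop_class src tgt L ->
  irreducible_mx (blockM src tgt d T L) ->
  irreducible_loop_class src tgt d T L.
Proof.
move=> _ hirr.
pose X := {v : V & 'I_(d v)}.
pose good (x y : X) (g : seq E) := exists e p, g = e :: p /\
  [/\ sorted (adj src tgt) (e :: p), src e = tag x, tgt (last e p) = tag y &
      0 < pmat tgt d T e p (tagged x) (tagged y)].
pose P (xy : X * X) := (xy.1 \in Lidx d L) && (xy.2 \in Lidx d L).
have hex : forall xy : X * X, exists g, P xy -> good xy.1 xy.2 g.
  case=> x y; rewrite /P /=.
  case hx: (x \in Lidx d L); case hy: (y \in Lidx d L); try by exists [::].
  have [k [hk hpos]] := hirr (enum_rank_in hx x) (enum_rank_in hx y).
  case: k hk hpos => // k _ /(@path_of_pos _ _ _ src tgt d T T_nonneg L k) [e [p []]].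
  rewrite !enum_rankK_in // => hs hsrc htgt hpos.
  by exists (e :: p) => _; exists e, p.
pose gam xy := proj1_sig (constructive_indefinite_description _ (hex xy)).
have hgam xy : P xy -> good xy.1 xy.2 (gam xy) :=
  proj2_sig (constructive_indefinite_description _ (hex xy)).
pose gent (g : seq E) a b := if g is e :: p then pmat tgt d T e p a b else 0.
pose f xy := pnorm src tgt d T (gam xy) +
   (d (tag xy.1) * d (tag xy.2))%:R / gent (gam xy) (tagged xy.1) (tagged xy.2).
have f_ge0 xy : P xy -> 0 <= f xy.
  move=> /hgam [e [p [hg [hs _ _ hpos]]]].
  rewrite /f hg /=; apply: addr_ge0; first exact: (@pnorm_ge0 _ _ _ src tgt d T T_nonneg).
  by apply: divr_ge0 => //; apply: ltW.
have f_le xy : P xy -> f xy <= \sum_(z | P z) f z.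
  move=> hP; rewrite (bigD1 xy) //= lerDl.
  by apply: sumr_ge0 => z /andP [hz _]; apply: f_ge0.
pose C := 1 + \sum_(z | P z) f z.
exists [seq gam xy | xy <- enum predT], C.
split; first by rewrite lerDl; apply: sumr_ge0 => z hz; apply: f_ge0.
move=> [|e1 p1] [|e2 p2] [[h1 s1] a1] [[h2 s2] a2] //.
have hu : tgt (last e1 p1) \in L.
  by move/allP: a1 => /(_ _ (mem_last e1 p1)) /andP [].
have hw : src e2 \in L by case/andP: a2 => /andP [].
pose cA k := \sum_(i < d (src e1)) pmat tgt d T e1 p1 i k.
pose rC l := \sum_(j < d (tgt (last e2 p2))) pmat tgt d T e2 p2 l j.
have [a [ha hamax]] := @exists_argmax _ _ cA (d_pos (tgt (last e1 p1))).
have [b [hb hbmax]] := @exists_argmax _ _ rC (d_pos (src e2)).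
pose x : X := Tagged (fun v => 'I_(d v)) (Ordinal ha).
pose y : X := Tagged (fun v => 'I_(d v)) (Ordinal hb).
have hP : P (x, y) by rewrite /P /Lidx !inE /= hu hw.
move: (hgam (x, y) hP) => [g [gp [hg [sg hsg htg hpos]]]].
exists (gam (x, y)); first by apply/mapP; exists (x, y); rewrite ?mem_enum.
have hfxy : pnorm src tgt d T (g :: gp) +
   (d (tgt (last e1 p1)) * d (src e2))%:R / pmat tgt d T g gp a b <= C.
  have : f (x, y) <= C by apply: le_trans (f_le _ hP) _; rewrite lerDr.
  by rewrite /f hg.
rewrite /= in hsg htg hpos.
have hN0 : 0 <= pnorm src tgt d T (g :: gp) by exact: (@pnorm_ge0 _ _ _ src tgt d T T_nonneg).
have sall : sorted (adj src tgt) ((e1 :: p1) ++ (g :: gp) ++ e2 :: p2).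
  rewrite /= cat_path /= cat_path /=; move: (s1) (sg) (s2) => /= -> -> ->; rewrite !andbT.
  by rewrite /adj hsg htg !eqxx.
have cA0 k : (k < d (tgt (last e1 p1)))%N -> 0 <= cA k.
  move=> hk; apply: sumr_ge0 => i _; exact: (@pmat_ge0 _ _ _ src tgt d T T_nonneg).
have rC0 l : (l < d (src e2))%N -> 0 <= rC l.
  move=> hl; apply: sumr_ge0 => j _; exact: (@pmat_ge0 _ _ _ src tgt d T T_nonneg).
have HA : pnorm src tgt d T (e1 :: p1) = \sum_(k < d (tgt (last e1 p1))) cA k.
  by rewrite /pnorm exchange_big.
have HC : pnorm src tgt d T (e2 :: p2) = \sum_(l < d (src e2)) rC l by [].
have Heq : pnorm src tgt d T ((e1 :: p1) ++ (g :: gp) ++ e2 :: p2) =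
  \sum_(k < d (tgt (last e1 p1))) \sum_(l < d (src e2))
     pmat tgt d T g gp k l * (cA k * rC l).
  rewrite /pnorm /= last_cat /= last_cat /=.
  under eq_bigr => i _ do under eq_bigr => j _ do rewrite pmat_cat.
  under eq_bigr => i _ do under eq_bigr => j _ do under eq_bigr => k _ do rewrite pmat_cat.
  by rewrite sum4 htg.
have hDu := d_pos (tgt (last e1 p1)).
have hDw := d_pos (src e2).
have hG0 k l : (k < d (tgt (last e1 p1)))%N -> (l < d (src e2))%N ->
    0 <= pmat tgt d T g gp k l.
  move=> hk hl; apply: (@pmat_ge0 _ _ _ src tgt d T T_nonneg) => //.
    by rewrite hsg.
  by rewrite htg.
have SA0 : 0 <= \sum_(k < d (tgt (last e1 p1))) cA k.
  by apply: sumr_ge0 => k _; apply: cA0.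
have SC0 : 0 <= \sum_(l < d (src e2)) rC l.
  by apply: sumr_ge0 => l _; apply: rC0.
have hK : 0 < (d (tgt (last e1 p1)) * d (src e2))%:R / pmat tgt d T g gp a b.
  by apply: divr_gt0 => //; rewrite ltr0n muln_gt0 hDu hDw.
rewrite hg HA HC Heq; split.
- by split.
- by split.
- apply: (le_trans _ (@single_le_sum _ _ (fun k => \sum_(l < d (src e2))
     pmat tgt d T g gp k l * (cA k * rC l)) a ha _)); last first.
    move=> k hk; apply: sumr_ge0 => l _; apply: mulr_ge0; first exact: hG0.
    by apply: mulr_ge0; [apply: cA0 | apply: rC0].
  apply: (le_trans _ (@single_le_sum _ _ (fun l =>
     pmat tgt d T g gp a l * (cA a * rC l)) b hb _)); last first.
    move=> l hl; apply: mulr_ge0; first exact: hG0.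
    by apply: mulr_ge0; [apply: cA0 | apply: rC0].
  have hSA := @sum_le_card_max _ _ cA a hamax.
  have hSC := @sum_le_card_max _ _ rC b hbmax.
  have hCK : C^-1 <= ((d (tgt (last e1 p1)) * d (src e2))%:R / pmat tgt d T g gp a b)^-1.
    have hKC : (d (tgt (last e1 p1)) * d (src e2))%:R / pmat tgt d T g gp a b <= C.
      by apply: le_trans hfxy; rewrite lerDr.
    rewrite lef_pV2 ?posrE //; exact: lt_le_trans hK hKC.
  apply: le_trans (ler_wpM2r (mulr_ge0 SA0 SC0) hCK) _.
  have hKi : 0 <= ((d (tgt (last e1 p1)) * d (src e2))%:R / pmat tgt d T g gp a b)^-1.
    by rewrite invr_ge0 ltW.
  apply: le_trans (ler_wpM2l hKi (ler_pM SA0 SC0 hSA hSC)) _.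
  rewrite invf_div natrM.
  rewrite le_eqVlt; apply/orP; left; apply/eqP.
  field; apply/andP; split; rewrite pnatr_eq0 -lt0n //.
- apply: le_trans (_ : \sum_(k < d (tgt (last e1 p1))) \sum_(l < d (src e2))
     pnorm src tgt d T (g :: gp) * (cA k * rC l) <= _).
    apply: ler_sum => k _; apply: ler_sum => l _.
    apply: ler_wpM2r; first by apply: mulr_ge0; [apply: cA0 | apply: rC0].
    apply: (@entry_le_pnorm _ _ _ src tgt d T T_nonneg) => //.
      by rewrite hsg.
    by rewrite htg.
  rewrite (@sum_prod _ _ _ _ cA rC).
  apply: ler_wpM2r; first exact: mulr_ge0.
  by apply: le_trans hfxy; rewrite lerDl; apply: ltW.
Qed.
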